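(* Let $\pi_3$ be the five-dimensional complex associative algebra with basis $e_1,\dots,e_5$ and nonzero products $e_1e_1=e_2$, $e_1e_2=e_2e_1=e_3$, $e_1e_4=e_5$, $e_4e_4=e_5$ (all other products of basis elements are zero). The vector space $LocDer(\pi_3)$ of all local derivations of $\pi_3$ is a Lie algebra with respect to the bracket $[\nabla,\Delta]=\nabla\Delta-\Delta\nabla$; that is, $[\nabla,\Delta]\in LocDer(\pi_3)$ for all $\nabla,\Delta\in LocDer(\pi_3)$.
   Context: A derivation of an algebra $A$ is a linear map $D$ with $D(xy)=D(x)y+xD(y)$ for all $x,y\in A$. A linear map $\nabla:A\to A$ is a local derivation if for every $x\in A$ there is a derivation $D_x$ of $A$ (depending on $x$) with $\nabla(x)=D_x(x)$. *)

(* Defs.v *)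
From mathcomp Require Import all_boot all_algebra.
From mathcomp Require Import complex.
From mathcomp Require Import Rstruct.
From Stdlib Require Import Reals.
Set Implicit Arguments. Unset Strict Implicit. Unset Printing Implicit Defensive.
Import GRing.Theory.
Local Open Scope ring_scope.

Definition Cplx : fieldType := complex.complex R.

(* Elements of pi_3 are coordinate row vectors w.r.t. the basis e_1..e_5;
   index i : 'I_5 corresponds to e_(i+1). *)
Definition pi3 := 'rV[Cplx]_5.

Definition pi3_e (i : 'I_5) : pi3 := delta_mx 0 i.

Definition pi3_table (i j : 'I_5) : pi3 :=
  match nat_of_ord i, nat_of_ord j with
  | 0, 0 => pi3_e (inord 1)
  | 0, 1 => pi3_e (inord 2)
  | 1, 0 => pi3_e (inord 2)
  | 0, 3 => pi3_e (inord 4)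
  | 3, 3 => pi3_e (inord 4)
  | _, _ => 0
  end%N.

Definition pi3_mul (x y : pi3) : pi3 :=
  \sum_(i < 5) \sum_(j < 5) (x 0 i * y 0 j) *: pi3_table i j.

Definition is_derivation (K : fieldType) (V : lmodType K)
    (mul : V -> V -> V) (D : V -> V) : Prop :=
  (forall (a : K) (u v : V), D (a *: u + v) = a *: D u + D v) /\
  forall x y, D (mul x y) = mul (D x) y + mul x (D y).

Definition is_local_derivation (K : fieldType) (V : lmodType K)
    (mul : V -> V -> V) (N : V -> V) : Prop :=
  (forall (a : K) (u v : V), N (a *: u + v) = a *: N u + N v) /\
  forall x, exists D : V -> V, is_derivation mul D /\ N x = D x.

Definition lie_bracket (K : fieldType) (V : lmodType K) (N M : V -> V) : V -> V :=
  fun x => N (M x) - M (N x).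

(* Main.v *)
Require Import Defs.
From mathcomp Require Import all_boot all_algebra.
From mathcomp Require Import complex Rstruct.
From mathcomp Require Import ring.
Set Implicit Arguments. Unset Strict Implicit. Unset Printing Implicit Defensive.
Import GRing.Theory.
Local Open Scope ring_scope.

Definition i0 : 'I_5 := @Ordinal 5 0 isT.
Definition i1 : 'I_5 := @Ordinal 5 1 isT.
Definition i2 : 'I_5 := @Ordinal 5 2 isT.
Definition i3 : 'I_5 := @Ordinal 5 3 isT.
Definition i4 : 'I_5 := @Ordinal 5 4 isT.

Lemma ne01 : (i0 == i1) = false. Proof. by rewrite -val_eqE. Qed.
Lemma ne02 : (i0 == i2) = false. Proof. by rewrite -val_eqE. Qed.
Lemma ne03 : (i0 == i3) = false. Proof. by rewrite -val_eqE. Qed.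
Lemma ne04 : (i0 == i4) = false. Proof. by rewrite -val_eqE. Qed.
Lemma ne10 : (i1 == i0) = false. Proof. by rewrite -val_eqE. Qed.
Lemma ne12 : (i1 == i2) = false. Proof. by rewrite -val_eqE. Qed.
Lemma ne13 : (i1 == i3) = false. Proof. by rewrite -val_eqE. Qed.
Lemma ne14 : (i1 == i4) = false. Proof. by rewrite -val_eqE. Qed.
Lemma ne20 : (i2 == i0) = false. Proof. by rewrite -val_eqE. Qed.
Lemma ne21 : (i2 == i1) = false. Proof. by rewrite -val_eqE. Qed.
Lemma ne23 : (i2 == i3) = false. Proof. by rewrite -val_eqE. Qed.
Lemma ne24 : (i2 == i4) = false. Proof. by rewrite -val_eqE. Qed.
Lemma ne30 : (i3 == i0) = false. Proof. by rewrite -val_eqE. Qed.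
Lemma ne31 : (i3 == i1) = false. Proof. by rewrite -val_eqE. Qed.
Lemma ne32 : (i3 == i2) = false. Proof. by rewrite -val_eqE. Qed.
Lemma ne34 : (i3 == i4) = false. Proof. by rewrite -val_eqE. Qed.
Lemma ne40 : (i4 == i0) = false. Proof. by rewrite -val_eqE. Qed.
Lemma ne41 : (i4 == i1) = false. Proof. by rewrite -val_eqE. Qed.
Lemma ne42 : (i4 == i2) = false. Proof. by rewrite -val_eqE. Qed.
Lemma ne43 : (i4 == i3) = false. Proof. by rewrite -val_eqE. Qed.

Definition mk5 (a b c d e : Cplx) : pi3 := \row_(k < 5) nth 0 [:: a; b; c; d; e] k.

Lemma eq5 (v w : pi3) : v 0 i0 = w 0 i0 -> v 0 i1 = w 0 i1 -> v 0 i2 = w 0 i2 ->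
  v 0 i3 = w 0 i3 -> v 0 i4 = w 0 i4 -> v = w.
Proof.
move=> h0 h1 h2 h3 h4; apply/rowP=> k.
case: k => [[|[|[|[|[|k]]]]] Hk] //.
- by rewrite (_ : Ordinal Hk = i0) //; apply: val_inj.
- by rewrite (_ : Ordinal Hk = i1) //; apply: val_inj.
- by rewrite (_ : Ordinal Hk = i2) //; apply: val_inj.
- by rewrite (_ : Ordinal Hk = i3) //; apply: val_inj.
- by rewrite (_ : Ordinal Hk = i4) //; apply: val_inj.
Qed.

Lemma sum5 (V : nmodType) (F : 'I_5 -> V) :
  \sum_(i < 5) F i = F i0 + F i1 + F i2 + F i3 + F i4.
Proof.
rewrite !big_ord_recl big_ord0 addr0 !addrA.
have -> : i0 = ord0 by apply: val_inj.
have -> : i1 = lift ord0 ord0 by apply: val_inj.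
have -> : i2 = lift ord0 (lift ord0 ord0) by apply: val_inj.
have -> : i3 = lift ord0 (lift ord0 (lift ord0 ord0)) by apply: val_inj.
by have -> : i4 = lift ord0 (lift ord0 (lift ord0 (lift ord0 ord0))) by apply: val_inj.
Qed.

Lemma eE (j k : 'I_5) : pi3_e j 0 k = (j == k)%:R.
Proof. by rewrite mxE eqxx /= eq_sym -val_eqE. Qed.

Lemma test : (i1 == i2) = false.
Proof. by rewrite -val_eqE. Qed.

Lemma mk5E a b c d e : (mk5 a b c d e 0 i0 = a) * (mk5 a b c d e 0 i1 = b) *
  (mk5 a b c d e 0 i2 = c) * (mk5 a b c d e 0 i3 = d) * (mk5 a b c d e 0 i4 = e).
Proof. by rewrite !mxE. Qed.

Section Gen.
Variable K : fieldType.
Definition e_g (i : 'I_5) : 'rV[K]_5 := delta_mx 0 i.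
Definition table_g (i j : 'I_5) : 'rV[K]_5 :=
  match nat_of_ord i, nat_of_ord j with
  | 0, 0 => e_g (inord 1)
  | 0, 1 => e_g (inord 2)
  | 1, 0 => e_g (inord 2)
  | 0, 3 => e_g (inord 4)
  | 3, 3 => e_g (inord 4)
  | _, _ => 0%R
  end%N.
Definition mul_g (x y : 'rV[K]_5) : 'rV[K]_5 :=
  \sum_(i < 5) \sum_(j < 5) (x 0 i * y 0 j) *: table_g i j.
Definition mk5g (a b c d e : K) : 'rV[K]_5 := \row_(k < 5) nth 0 [:: a; b; c; d; e] k.

Lemma eq5g (v w : 'rV[K]_5) : v 0 i0 = w 0 i0 -> v 0 i1 = w 0 i1 -> v 0 i2 = w 0 i2 ->
  v 0 i3 = w 0 i3 -> v 0 i4 = w 0 i4 -> v = w.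
Proof.
move=> h0 h1 h2 h3 h4; apply/rowP=> k.
case: k => [[|[|[|[|[|k]]]]] Hk] //.
- by rewrite (_ : Ordinal Hk = i0) //; apply: val_inj.
- by rewrite (_ : Ordinal Hk = i1) //; apply: val_inj.
- by rewrite (_ : Ordinal Hk = i2) //; apply: val_inj.
- by rewrite (_ : Ordinal Hk = i3) //; apply: val_inj.
- by rewrite (_ : Ordinal Hk = i4) //; apply: val_inj.
Qed.

Lemma mulgE x y : mul_g x y = mk5g 0 (x 0 i0 * y 0 i0)
  (x 0 i0 * y 0 i1 + x 0 i1 * y 0 i0) 0 (x 0 i0 * y 0 i3 + x 0 i3 * y 0 i3).
Proof.
have I1 : (inord 1 : 'I_5) = i1 by apply: val_inj; rewrite /= inordK.
have I2 : (inord 2 : 'I_5) = i2 by apply: val_inj; rewrite /= inordK.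
have I4 : (inord 4 : 'I_5) = i4 by apply: val_inj; rewrite /= inordK.
rewrite /mul_g sum5; rewrite !sum5.
have n0 : nat_of_ord i0 = 0%N by [].
have n1 : nat_of_ord i1 = 1%N by [].
have n2 : nat_of_ord i2 = 2%N by [].
have n3 : nat_of_ord i3 = 3%N by [].
have n4 : nat_of_ord i4 = 4%N by [].
rewrite /table_g !n0 !n1 !n2 !n3 !n4; cbv beta iota.
rewrite I1 I2 I4.
apply: eq5g; rewrite !mxE !eqxx !andTb.
all: rewrite ?ne01 ?ne02 ?ne03 ?ne04 ?ne10 ?ne12 ?ne13 ?ne14 ?ne20 ?ne21 ?ne23 ?ne24 ?ne30 ?ne31 ?ne32 ?ne34 ?ne40 ?ne41 ?ne42 ?ne43.
all: rewrite /= ?mulr0 ?mulr1 ?addr0 ?add0r //.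
Qed.


Lemma mk5gE a b c d e : (mk5g a b c d e 0 i0 = a) * (mk5g a b c d e 0 i1 = b) *
  (mk5g a b c d e 0 i2 = c) * (mk5g a b c d e 0 i3 = d) * (mk5g a b c d e 0 i4 = e).
Proof. by rewrite !mxE. Qed.

Lemma egE (j k : 'I_5) : e_g j 0 k = (j == k)%:R.
Proof. by rewrite mxE eqxx /= eq_sym. Qed.

Lemma addE (u v : 'rV[K]_5) k : (u + v) 0 k = u 0 k + v 0 k.
Proof. by rewrite mxE. Qed.
Lemma scaleE a (u : 'rV[K]_5) k : (a *: u) 0 k = a * u 0 k.
Proof. by rewrite mxE. Qed.
Lemma oppE (u : 'rV[K]_5) k : (- u) 0 k = - u 0 k.
Proof. by rewrite mxE. Qed.
Lemma zeroE k : (0 : 'rV[K]_5) 0 k = 0.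
Proof. by rewrite mxE. Qed.

Ltac simp := rewrite ?mulgE ?addE ?oppE ?scaleE ?zeroE ?mk5gE ?egE ?eqxx
  ?ne01 ?ne02 ?ne03 ?ne04 ?ne10 ?ne12 ?ne13 ?ne14 ?ne20 ?ne21 ?ne23 ?ne24
  ?ne30 ?ne31 ?ne32 ?ne34 ?ne40 ?ne41 ?ne42 ?ne43 ?mulr1n ?mulr0n
  ?mulr0 ?mul0r ?mulr1 ?mul1r ?addr0 ?add0r.

Definition linP (N : 'rV[K]_5 -> 'rV[K]_5) :=
  forall (a : K) (u v : 'rV[K]_5), N (a *: u + v) = a *: N u + N v.

Lemma lin0 N : linP N -> N 0 = 0.
Proof.
move=> h; have := h 1 0 0; rewrite !scale1r addr0 => H.
by apply: (@addrI _ (N 0)); rewrite addr0 -H.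
Qed.
Lemma linD N : linP N -> forall u v, N (u + v) = N u + N v.
Proof. by move=> h u v; rewrite -[u in LHS]scale1r h scale1r. Qed.

Lemma expand (x : 'rV[K]_5) : x = x 0 i0 *: e_g i0 + (x 0 i1 *: e_g i1 +
  (x 0 i2 *: e_g i2 + (x 0 i3 *: e_g i3 + (x 0 i4 *: e_g i4 + 0)))).
Proof. by apply: eq5g; simp. Qed.

Lemma lin_expand N : linP N -> forall x k, N x 0 k =
  x 0 i0 * N (e_g i0) 0 k + x 0 i1 * N (e_g i1) 0 k + x 0 i2 * N (e_g i2) 0 k
  + x 0 i3 * N (e_g i3) 0 k + x 0 i4 * N (e_g i4) 0 k.
Proof.
move=> h x k; rewrite {1}(expand x) !h lin0 //; simp; by rewrite !addrA.
Qed.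

Lemma derF D : is_derivation mul_g D ->
  let u j k := D (e_g j) 0 k in let a := u i0 i0 in
  [/\ u i0 i3 = 0, [/\ u i1 i0 = 0, u i1 i1 = 2 * a, u i1 i3 = 0 & u i1 i4 = 0],
      [/\ u i2 i0 = 0, u i2 i1 = 0, u i2 i2 = 3 * a, u i2 i3 = 0 & u i2 i4 = 0],
      [/\ u i3 i0 = 0, u i3 i1 = 0 & u i3 i3 = a] &
      [/\ u i4 i0 = 0, u i4 i1 = 0, u i4 i2 = 0, u i4 i3 = 0 & u i4 i4 = 2 * a]].
Proof.
move=> [hl hm] u a.
have D0 := lin0 hl.
have P30 : mul_g (e_g i3) (e_g i0) = 0 by apply: eq5g; simp.
have P00 : mul_g (e_g i0) (e_g i0) = e_g i1 by apply: eq5g; simp.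
have P01 : mul_g (e_g i0) (e_g i1) = e_g i2 by apply: eq5g; simp.
have P33 : mul_g (e_g i3) (e_g i3) = e_g i4 by apply: eq5g; simp.
have P03 : mul_g (e_g i0) (e_g i3) = e_g i4 by apply: eq5g; simp.
have R1 := hm (e_g i3) (e_g i0); rewrite P30 D0 in R1.
have R2 := hm (e_g i0) (e_g i0); rewrite P00 in R2.
have R3 := hm (e_g i0) (e_g i1); rewrite P01 in R3.
have R4 := hm (e_g i3) (e_g i3); rewrite P33 in R4.
have R5 := hm (e_g i0) (e_g i3); rewrite P03 in R5.
have E k (v w : 'rV[K]_5) : v = w -> v 0 k = w 0 k by move=> ->.
have R1b := E i1 _ _ R1; have R1c := E i2 _ _ R1; have R1e := E i4 _ _ R1.
have R2a := E i0 _ _ R2; have R2b := E i1 _ _ R2; have R2d := E i3 _ _ R2; have R2e := E i4 _ _ R2.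
have R3a := E i0 _ _ R3; have R3b := E i1 _ _ R3; have R3c := E i2 _ _ R3; have R3d := E i3 _ _ R3; have R3e := E i4 _ _ R3.
have R4a := E i0 _ _ R4; have R4b := E i1 _ _ R4; have R4c := E i2 _ _ R4; have R4d := E i3 _ _ R4; have R4e := E i4 _ _ R4.
have R5e := E i4 _ _ R5.
move: R1b R1c R1e R2a R2b R2d R2e R3a R3b R3c R3d R3e R4a R4b R4c R4d R4e R5e.
simp.
move=> h30 h31 h03 h10 h11 h13 h14 h20 h21 h22 h23 h24 h40 h41 h42 h43 h44 h44'.
have h33 : D (e_g i3) 0 i3 = D (e_g i0) 0 i0.
  by move: h44'; rewrite h44 -h30 -h03 add0r addr0 => /addIr.
rewrite /a /u; split; [by [] | split | split | split | split].
all: rewrite ?h10 ?h13 ?h14 ?h20 ?h21 ?h22 ?h23 ?h24 ?h40 ?h41 ?h42 ?h43 ?h44 ?h11 ?h10 ?h13 -?h30 -?h31 -?h03 ?h33 //.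
all: ring.
Qed.

Definition Nform (c p21 p31 p32 p34 p51 p54 : K) (x : 'rV[K]_5) :=
  mk5g (c * x 0 i0) (p21 * x 0 i0 + 2 * c * x 0 i1)
    (p31 * x 0 i0 + p32 * x 0 i1 + 3 * c * x 0 i2 + p34 * x 0 i3)
    (c * x 0 i3) (p51 * x 0 i0 + p54 * x 0 i3 + 2 * c * x 0 i4).

Ltac dfacts hD := case: (derF hD) => /= ? [? ? ? ?] [? ? ? ? ?] [? ? ?] [? ? ? ? ?].

Lemma locF N : (2 : K) != 0 -> is_local_derivation mul_g N ->
  let v j k := N (e_g j) 0 k in
  forall x, N x = Nform (v i0 i0) (v i0 i1) (v i0 i2) (v i1 i2) (v i3 i2) (v i0 i4) (v i3 i4) x.
Proof.
move=> h2 [hl hloc] v.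
have E k (a b : 'rV[K]_5) : a = b -> a 0 k = b 0 k by move=> ->.
have [D0 [hD0 E0]] := hloc (e_g i0).
case: (derF hD0) => /= d003 _ _ _ _.
have n03 : N (e_g i0) 0 i3 = 0 by rewrite E0.
have [D1 [hD1 E1]] := hloc (e_g i1).
case: (derF hD1) => /= _ [d110 _ d113 d114] _ _ _.
have n10 : N (e_g i1) 0 i0 = 0 by rewrite E1.
have n13 : N (e_g i1) 0 i3 = 0 by rewrite E1.
have n14 : N (e_g i1) 0 i4 = 0 by rewrite E1.
have [D2 [hD2 E2]] := hloc (e_g i2).
case: (derF hD2) => /= _ _ [d220 d221 _ d223 d224] _ _.
have n20 : N (e_g i2) 0 i0 = 0 by rewrite E2.
have n21 : N (e_g i2) 0 i1 = 0 by rewrite E2.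
have n23 : N (e_g i2) 0 i3 = 0 by rewrite E2.
have n24 : N (e_g i2) 0 i4 = 0 by rewrite E2.
have [D3 [hD3 E3]] := hloc (e_g i3).
case: (derF hD3) => /= _ _ _ [d330 d331 _] _.
have n30 : N (e_g i3) 0 i0 = 0 by rewrite E3.
have n31 : N (e_g i3) 0 i1 = 0 by rewrite E3.
have [D4 [hD4 E4]] := hloc (e_g i4).
case: (derF hD4) => /= _ _ _ _ [d440 d441 d442 d443 _].
have n40 : N (e_g i4) 0 i0 = 0 by rewrite E4.
have n41 : N (e_g i4) 0 i1 = 0 by rewrite E4.
have n42 : N (e_g i4) 0 i2 = 0 by rewrite E4.
have n43 : N (e_g i4) 0 i3 = 0 by rewrite E4.
have n33 : N (e_g i3) 0 i3 = N (e_g i0) 0 i0.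
  have [D [hD ED]] := hloc (e_g i0 + e_g i3).
  rewrite (linD hl) (linD hD.1) in ED.
  have := E i0 _ _ ED; have := E i3 _ _ ED; rewrite !addE.
  case: (derF hD) => /= f03 _ _ [f30 f31 f33] _.
  rewrite f03 f30 f33 add0r addr0.
  by rewrite n03 n30 add0r addr0 => -> ->.
have n11 : N (e_g i1) 0 i1 = 2 * N (e_g i0) 0 i0.
  have [D [hD ED]] := hloc (e_g i1 + e_g i3).
  rewrite (linD hl) (linD hD.1) in ED.
  have := E i1 _ _ ED; have := E i3 _ _ ED; rewrite !addE.
  case: (derF hD) => /= _ [_ f11 f13 _] _ [_ f31 f33] _.
  rewrite f11 f13 f31 f33 n31 n13 n33 !add0r !addr0.
  by move=> -> ->.
have n44 : N (e_g i4) 0 i4 = 2 * N (e_g i0) 0 i0.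
  have [D [hD ED]] := hloc (e_g i1 + e_g i4).
  rewrite (linD hl) (linD hD.1) in ED.
  have := E i1 _ _ ED; have := E i4 _ _ ED; rewrite !addE.
  case: (derF hD) => /= _ [_ f11 _ f14] _ _ [_ f41 _ _ f44].
  rewrite f11 f14 f41 f44 n41 n14 !add0r !addr0.
  by move=> -> <-.
have n22 : N (e_g i2) 0 i2 = 3 * N (e_g i0) 0 i0.
  have [D [hD ED]] := hloc (e_g i2 + e_g i4).
  rewrite (linD hl) (linD hD.1) in ED.
  have := E i2 _ _ ED; have := E i4 _ _ ED; rewrite !addE.
  case: (derF hD) => /= _ _ [_ _ f22 _ f24] _ [_ _ f42 _ f44].
  rewrite f22 f24 f42 f44 n42 n24 n44 !add0r !addr0.
  by move=> /(mulfI h2) -> ->.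
rewrite /v => x; apply: eq5g; rewrite (lin_expand hl x) /Nform; simp.
all: rewrite ?n10 ?n20 ?n30 ?n40 ?n11 ?n21 ?n31 ?n41 ?n42 ?n22 ?n03 ?n13 ?n23 ?n33 ?n43 ?n14 ?n24 ?n44; ring.
Qed.

Definition Dform (a1 a2 a3 a5 b3 b5 : K) (x : 'rV[K]_5) :=
  mk5g (a1 * x 0 i0) (a2 * x 0 i0 + 2 * a1 * x 0 i1)
    (a3 * x 0 i0 + 2 * a2 * x 0 i1 + 3 * a1 * x 0 i2 + b3 * x 0 i3)
    (a1 * x 0 i3) (a5 * x 0 i0 + b5 * x 0 i3 + 2 * a1 * x 0 i4).

Lemma Dder a1 a2 a3 a5 b3 b5 : is_derivation mul_g (Dform a1 a2 a3 a5 b3 b5).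
Proof.
split => [a u v | x y]; apply: eq5g; rewrite /Dform; simp; ring.
Qed.

Lemma Nloc c p21 p31 p32 p34 p51 p54 : (2 : K) != 0 ->
  is_local_derivation mul_g (Nform c p21 p31 p32 p34 p51 p54).
Proof.
move=> h2; split => [a u v | x].
  by apply: eq5g; rewrite /Nform; simp; ring.
case: (eqVneq (x 0 i0) 0) => h0.
  case: (eqVneq (x 0 i3) 0) => h3.
    exists (Dform c (p32 / 2) 0 0 0 0); split; first exact: Dder.
    apply: eq5g; rewrite /Nform /Dform; simp; rewrite ?h0 ?h3; field.
    all: try done.
  exists (Dform c 0 0 0 ((p32 * x 0 i1 + p34 * x 0 i3) / x 0 i3) p54); split; first exact: Dder.
  apply: eq5g; rewrite /Nform /Dform; simp; rewrite ?h0; field.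
  all: try done.
exists (Dform c p21 ((p31 * x 0 i0 + p32 * x 0 i1 + p34 * x 0 i3 - 2 * p21 * x 0 i1) / x 0 i0)
  ((p51 * x 0 i0 + p54 * x 0 i3) / x 0 i0) 0 0); split; first exact: Dder.
apply: eq5g; rewrite /Nform /Dform; simp; field.
all: try done.
Qed.

Lemma brk c p21 p31 p32 p34 p51 p54 d q21 q31 q32 q34 q51 q54 x :
  lie_bracket (Nform c p21 p31 p32 p34 p51 p54) (Nform d q21 q31 q32 q34 q51 q54) x =
  Nform 0 (c * q21 - d * p21) (2 * c * q31 - 2 * d * p31 + p32 * q21 - q32 * p21)
    (c * q32 - d * p32) (2 * (c * q34 - d * p34)) (c * q51 - d * p51) (c * q54 - d * p54) x.
Proof. rewrite /lie_bracket; apply: eq5g; rewrite /Nform; simp; ring. Qed.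

Lemma ext_loc (F G : 'rV[K]_5 -> 'rV[K]_5) : (forall x, F x = G x) ->
  is_local_derivation mul_g G -> is_local_derivation mul_g F.
Proof.
move=> e [l h]; split => [a u v | x]; first by rewrite !e l.
by have [D [hD E]] := h x; exists D; split; rewrite // e.
Qed.

Lemma brk_ext N M c p21 p31 p32 p34 p51 p54 d q21 q31 q32 q34 q51 q54 :
  (2 : K) != 0 ->
  (forall x, N x = Nform c p21 p31 p32 p34 p51 p54 x) ->
  (forall x, M x = Nform d q21 q31 q32 q34 q51 q54 x) ->
  is_local_derivation mul_g (lie_bracket N M).
Proof.
move=> h2 eN eM.
apply: (ext_loc (G := lie_bracket (Nform c p21 p31 p32 p34 p51 p54) (Nform d q21 q31 q32 q34 q51 q54))).
  by move=> x; rewrite /lie_bracket !eN !eM.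
by apply: ext_loc; [exact: brk | exact: Nloc].
Qed.

Lemma mainK N M : (2 : K) != 0 -> is_local_derivation mul_g N ->
  is_local_derivation mul_g M -> is_local_derivation mul_g (lie_bracket N M).
Proof.
move=> h2 hN hM.
exact: (brk_ext h2 (locF h2 hN) (locF h2 hM)).
Qed.

End Gen.

Lemma two_nz : (2 : Cplx) != 0.
Proof. by rewrite Num.Theory.pnatr_eq0. Qed.

Theorem theorem6p1 :
  forall N M : pi3 -> pi3,
    is_local_derivation pi3_mul N ->
    is_local_derivation pi3_mul M ->
    is_local_derivation pi3_mul (lie_bracket N M).
Proof. move=> N M; exact: (@mainK Cplx N M two_nz). Qed.
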